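(* In the variety $\mathbf{P}_3$ of $3$-dimensional complex Poisson algebras: (1) the Zariski closure of $\bigcup_{\alpha\in\mathbb{C}}O(\mathcal{P}_{3,4}^{\alpha})$ contains the orbit closures of $\mathcal{P}_{3,3}$, $\mathcal{P}_{3,2}$ and $\mathcal{P}_{3,1}$; (2) the Zariski closure of $\bigcup_{\alpha\in\mathbb{C}}O(\mathcal{P}_{3,16}^{\alpha})$ contains the orbit closures of $\mathcal{P}_{3,15}$, $\mathcal{P}_{3,13}$, $\mathcal{P}_{3,2}$ and $\mathcal{P}_{3,1}$. Here (basis $e_1,e_2,e_3$, only nonzero products listed up to commutativity/anticommutativity): $\mathcal{P}_{3,1}$: zero; $\mathcal{P}_{3,2}$: $\{e_1,e_2\}=e_3$; $\mathcal{P}_{3,3}$: $\{e_1,e_2\}=e_2,\{e_1,e_3\}=e_2+e_3$; $\mathcal{P}_{3,4}^{\alpha}$: $\{e_1,e_2\}=e_2,\{e_1,e_3\}=\alpha e_3$; $\mathcal{P}_{3,13}$: $e_1\cdot e_1=e_2$; $\mathcal{P}_{3,15}$: $e_1\cdot e_1=e_2,\{e_1,e_3\}=e_2$; $\mathcal{P}_{3,16}^{\alpha}$: $e_1\cdot e_2=e_3,\{e_1,e_2\}=\alpha e_3$.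
   Context: Fix a $3$-dimensional complex vector space $V$; pairs $(\mu,\mu')$ of bilinear maps on $V$ are identified with their structure constants in $\mathbb{C}^{54}$. $\mathbf{P}_3$ is the affine variety of pairs defining Poisson algebras ($\mu$ commutative associative, $\mu'$ Lie, Leibniz identity $\mu'(\mu(x,y),z)=\mu(\mu'(x,z),y)+\mu(x,\mu'(y,z))$). $\mathrm{GL}(V)$ acts by $(g*(\mu,\mu'))(x,y)=(g\mu(g^{-1}x,g^{-1}y),g\mu'(g^{-1}x,g^{-1}y))$, and $O(\mathcal{P})$ denotes the orbit of any structure representing $\mathcal{P}$. Closures are in the Zariski topology. *)

(* Defs.v *)
From HB Require Import structures.
From mathcomp Require Import all_boot all_algebra.
From mathcomp Require Import Rstruct complex.
From mathcomp Require Import mpoly.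
Set Implicit Arguments. Unset Strict Implicit. Unset Printing Implicit Defensive.
Import GRing.Theory.
Local Open Scope ring_scope.

Definition C : closedFieldType := complex Rdefinitions.R.

(* A point of C^54: structure constants of a pair (mu, mu') of bilinear maps
   on V = C^3 with basis e_1,e_2,e_3 (indices 0,1,2).
   Coordinate number 27*t + 9*i + 3*j + k is the e_k-coefficient of
   mu(e_i,e_j) if t = 0 and of mu'(e_i,e_j) if t = 1. *)
Definition pt := 'I_54 -> C.

Definition enc (t : 'I_2) (i j k : 'I_3) : 'I_54 :=
  inord (27 * t + 9 * i + 3 * j + k)%N.

Definition sc (x : pt) (t : 'I_2) (i j k : 'I_3) : C := x (enc t i j k).

Definition mk (f : 'I_2 -> 'I_3 -> 'I_3 -> 'I_3 -> C) : pt :=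
  fun n => f (inord (n %/ 27)) (inord ((n %% 27) %/ 9))
             (inord ((n %% 9) %/ 3)) (inord (n %% 3)).

(* The GL(V) action (g*(mu,mu'))(x,y) = (g mu(g^-1 x, g^-1 y), g mu'(g^-1 x, g^-1 y)),
   with g acting on coordinate columns: g e_a = \sum_k g k a e_k. *)
Definition actGL (g : 'M[C]_3) (x : pt) : pt :=
  mk (fun t i j k =>
        \sum_(a < 3) \sum_(b < 3) \sum_(l < 3)
          (invmx g) a i * (invmx g) b j * sc x t a b l * g k l).

Definition orbitGL (x : pt) : pt -> Prop :=
  fun y => exists g : 'M[C]_3, g \in unitmx /\ y = actGL g x.

Definition zclosure (S : pt -> Prop) : pt -> Prop :=
  fun x => forall p : {mpoly C[54]},
      (forall y, S y -> p.@[y] = 0) -> p.@[x] = 0.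

Definition subset_pt (A B : pt -> Prop) : Prop := forall x, A x -> B x.

(* The Poisson algebras (0 = e_1, 1 = e_2, 2 = e_3; t = 0 : mu, t = 1 : {,}) *)
Definition P3_1 : pt := mk (fun _ _ _ _ => 0).

Definition P3_2 : pt := mk (fun t i j k =>
  match nat_of_ord t, nat_of_ord i, nat_of_ord j, nat_of_ord k with
  | 1%N, 0%N, 1%N, 2%N => 1 | 1%N, 1%N, 0%N, 2%N => -1
  | _, _, _, _ => 0 end).

Definition P3_3 : pt := mk (fun t i j k =>
  match nat_of_ord t, nat_of_ord i, nat_of_ord j, nat_of_ord k with
  | 1%N, 0%N, 1%N, 1%N => 1 | 1%N, 1%N, 0%N, 1%N => -1
  | 1%N, 0%N, 2%N, 1%N => 1 | 1%N, 2%N, 0%N, 1%N => -1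
  | 1%N, 0%N, 2%N, 2%N => 1 | 1%N, 2%N, 0%N, 2%N => -1
  | _, _, _, _ => 0 end).

Definition P3_4 (alpha : C) : pt := mk (fun t i j k =>
  match nat_of_ord t, nat_of_ord i, nat_of_ord j, nat_of_ord k with
  | 1%N, 0%N, 1%N, 1%N => 1 | 1%N, 1%N, 0%N, 1%N => -1
  | 1%N, 0%N, 2%N, 2%N => alpha | 1%N, 2%N, 0%N, 2%N => - alpha
  | _, _, _, _ => 0 end).

Definition P3_13 : pt := mk (fun t i j k =>
  match nat_of_ord t, nat_of_ord i, nat_of_ord j, nat_of_ord k with
  | 0%N, 0%N, 0%N, 1%N => 1
  | _, _, _, _ => 0 end).

Definition P3_15 : pt := mk (fun t i j k =>
  match nat_of_ord t, nat_of_ord i, nat_of_ord j, nat_of_ord k with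
  | 0%N, 0%N, 0%N, 1%N => 1
  | 1%N, 0%N, 2%N, 1%N => 1 | 1%N, 2%N, 0%N, 1%N => -1
  | _, _, _, _ => 0 end).

Definition P3_16 (alpha : C) : pt := mk (fun t i j k =>
  match nat_of_ord t, nat_of_ord i, nat_of_ord j, nat_of_ord k with
  | 0%N, 0%N, 1%N, 2%N => 1 | 0%N, 1%N, 0%N, 2%N => 1
  | 1%N, 0%N, 1%N, 2%N => alpha | 1%N, 1%N, 0%N, 2%N => - alpha
  | _, _, _, _ => 0 end).

Definition family_orbits (F : C -> pt) : pt -> Prop :=
  fun y => exists alpha : C, orbitGL (F alpha) y.

(* Main.v *)
Require Import Defs.
From mathcomp Require Import all_boot all_algebra.
From mathcomp Require Import Rstruct complex.
From mathcomp Require Import mpoly.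
From mathcomp Require Import zify ring.
Set Implicit Arguments. Unset Strict Implicit. Unset Printing Implicit Defensive.
Import GRing.Theory Num.Theory.
Local Open Scope ring_scope.

Definition dt (n : 'I_54) : 'I_2 := inord (n %/ 27).
Definition di (n : 'I_54) : 'I_3 := inord ((n %% 27) %/ 9).
Definition dj (n : 'I_54) : 'I_3 := inord ((n %% 9) %/ 3).
Definition dk (n : 'I_54) : 'I_3 := inord (n %% 3).

Lemma mkE f n : mk f n = f (dt n) (di n) (dj n) (dk n).
Proof. by []. Qed.

Lemma enc_val t i j k : nat_of_ord (enc t i j k) = (27 * t + 9 * i + 3 * j + k)%N.
Proof.
rewrite /enc inordK //.
have := ltn_ord t; have := ltn_ord i; have := ltn_ord j; have := ltn_ord k. lia.
Qed.

Lemma dt_enc t i j k : dt (enc t i j k) = t.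
Proof.
apply: val_inj; rewrite /= inordK enc_val;
have := ltn_ord t; have := ltn_ord i; have := ltn_ord j; have := ltn_ord k; lia.
Qed.
Lemma di_enc t i j k : di (enc t i j k) = i.
Proof.
apply: val_inj; rewrite /= inordK enc_val;
have := ltn_ord t; have := ltn_ord i; have := ltn_ord j; have := ltn_ord k; lia.
Qed.
Lemma dj_enc t i j k : dj (enc t i j k) = j.
Proof.
apply: val_inj; rewrite /= inordK enc_val;
have := ltn_ord t; have := ltn_ord i; have := ltn_ord j; have := ltn_ord k; lia.
Qed.
Lemma dk_enc t i j k : dk (enc t i j k) = k.
Proof.
apply: val_inj; rewrite /= inordK enc_val;
have := ltn_ord t; have := ltn_ord i; have := ltn_ord j; have := ltn_ord k; lia.
Qed.
Lemma enc_dec n : enc (dt n) (di n) (dj n) (dk n) = n.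
Proof.
apply: val_inj; rewrite /= enc_val /dt /di /dj /dk !inordK; have := ltn_ord n; lia.
Qed.

Lemma sc_mk f t i j k : sc (mk f) t i j k = f t i j k.
Proof. by rewrite /sc mkE dt_enc di_enc dj_enc dk_enc. Qed.

Lemma poly_zero_of_roots (q : {poly C}) : (forall s, s != 0 -> q.[s] = 0) -> q = 0.
Proof.
move=> H; apply/eqP; apply/negPn/negP => nz.
pose rs := [seq (i.+1)%:R : C | i <- iota 0 (size q)].
have H1 : all (root q) rs.
  apply/allP => x /mapP [i _ ->]; apply/rootP/H; by rewrite pnatr_eq0.
have H2 : uniq rs.
  by rewrite map_inj_uniq ?iota_uniq // => i j /eqP; rewrite eqr_nat eqSS => /eqP.
have := max_poly_roots nz H1 H2; by rewrite size_map size_iota ltnn.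
Qed.

Lemma poly_of_meval (p : {mpoly C[54]}) (c : 'I_54 -> {poly C}) :
  exists q : {poly C}, forall s, q.[s] = p.@[fun n => (c n).[s]].
Proof.
exists (\sum_(m <- msupp p) p@_m *: \prod_i (c i)^+ (m i)) => s.
rewrite mevalE horner_sum; apply: eq_bigr => m _.
rewrite hornerZ horner_prod; congr (_ * _); apply: eq_bigr => i _.
by rewrite horner_exp.
Qed.

Lemma zcl_curve B (c : 'I_54 -> {poly C}) :
  (forall s, s != 0 -> B (fun n => (c n).[s])) -> zclosure B (fun n => (c n).[0]).
Proof.
move=> HB p Hp; have [q Hq] := poly_of_meval p c.
rewrite -Hq (@poly_zero_of_roots q) ?horner0 // => s s0.
by rewrite Hq; apply: Hp; apply: HB.
Qed.

Lemma zcl_closed A B : subset_pt A (zclosure B) -> subset_pt (zclosure A) (zclosure B).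
Proof. move=> H x Hx p Hp; apply: Hx => y Ay; exact: H y Ay p Hp. Qed.

Lemma zcl_sub B : subset_pt B (zclosure B).
Proof. by move=> x Bx p Hp; apply: Hp. Qed.

Lemma meval_sum_ I (r : seq I) (P : pred I) (F : I -> {mpoly C[54]}) y :
  (\sum_(i <- r | P i) F i).@[y] = \sum_(i <- r | P i) (F i).@[y].
Proof. exact: (big_morph _ (mevalD y) (meval0 y)). Qed.

Lemma meval_prod_ I (r : seq I) (P : pred I) (F : I -> {mpoly C[54]}) y :
  (\prod_(i <- r | P i) F i).@[y] = \prod_(i <- r | P i) (F i).@[y].
Proof. exact: (big_morph _ (mevalM y) (meval1 y)). Qed.

Lemma mpoly_of_act g (p : {mpoly C[54]}) :
  exists q : {mpoly C[54]}, forall y, q.@[y] = p.@[actGL g y].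
Proof.
pose L (n : 'I_54) : {mpoly C[54]} :=
  \sum_(a < 3) \sum_(b < 3) \sum_(l < 3)
    ((invmx g) a (di n) * (invmx g) b (dj n) * g (dk n) l) *: 'X_(enc (dt n) a b l).
have HL y n : (L n).@[y] = actGL g y n.
  rewrite /L /actGL mkE meval_sum_; apply: eq_bigr => a _.
  rewrite meval_sum_; apply: eq_bigr => b _.
  rewrite meval_sum_; apply: eq_bigr => l _.
  rewrite mevalZ mevalXU /sc; ring.
exists (\sum_(m <- msupp p) p@_m *: \prod_i (L i)^+ (m i)) => y.
rewrite [RHS]mevalE meval_sum_; apply: eq_bigr => m _.
rewrite mevalZ meval_prod_; congr (_ * _); apply: eq_bigr => i _.
by rewrite rmorphXn /= HL.
Qed.

From Stdlib Require Import FunctionalExtensionality.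

Lemma invmxM3 (g h : 'M[C]_3) : g \in unitmx -> h \in unitmx ->
  invmx (g *m h) = invmx h *m invmx g.
Proof.
move=> ug uh.
have ugh : g *m h \in unitmx by rewrite unitmx_mul ug uh.
have E : (g *m h) *m (invmx h *m invmx g) = 1%:M.
  by rewrite -mulmxA (mulmxA h) mulmxV // mul1mx mulmxV.
by rewrite -[RHS]mul1mx -(mulVmx ugh) -mulmxA E mulmx1.
Qed.

Lemma sum3 (F : 'I_3 -> 'I_3 -> 'I_3 -> C) :
  \sum_a \sum_b \sum_l F a b l = \sum_(p : 'I_3 * 'I_3 * 'I_3) F p.1.1 p.1.2 p.2.
Proof. by rewrite pair_bigA pair_bigA. Qed.

Lemma actGL_comp g h x : g \in unitmx -> h \in unitmx ->
  actGL g (actGL h x) = actGL (g *m h) x.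
Proof.
move=> ug uh; apply: functional_extensionality => n.
rewrite /actGL [LHS]mkE [RHS]mkE invmxM3 //.
under eq_bigr do under eq_bigr do under eq_bigr do rewrite sc_mk.
rewrite [RHS]sum3.
under eq_bigr => a _ do under eq_bigr => b _ do under eq_bigr => l _ do rewrite sum3 mulr_sumr mulr_suml.
under eq_bigr => a _ do under eq_bigr => b _ do rewrite exchange_big.
under eq_bigr => a _ do rewrite exchange_big.
rewrite exchange_big; apply: eq_bigr => q _.
rewrite !mxE !big_ord_recr !big_ord0 /=.
Time ring.
Qed.

Lemma iso_act h x T : h \in unitmx ->
  (forall t a b k, \sum_l sc T t a b l * h k l = \sum_i \sum_j h i a * h j b * sc x t i j k) ->
  T = actGL (invmx h) x.
Proof.
move=> uh HT; apply: functional_extensionality => n.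
rewrite /actGL mkE invmxK.
rewrite -[in LHS](enc_dec n).
set t := dt n; set i := di n; set j := dj n; set k := dk n.
change (T (enc t i j k)) with (sc T t i j k).
under eq_bigr => a _ do rewrite exchange_big.
rewrite exchange_big.
under eq_bigr => l _ do (under eq_bigr => a _ do rewrite -mulr_suml; rewrite -mulr_suml -HT mulr_suml).
rewrite exchange_big /=.
under eq_bigr => l' _ do (under eq_bigr => l _ do rewrite -mulrA; rewrite -mulr_sumr).
have E : forall l', \sum_l h l l' * invmx h k l = (k == l')%:R.
  move=> l'; have := mulVmx uh; move/matrixP/(_ k l'); rewrite !mxE => <-.
  by apply: eq_bigr => l _; rewrite mulrC.
under eq_bigr => l' _ do rewrite E.
rewrite (bigD1 k) //= eqxx mulr1 big1 ?addr0 // => l' /negPf.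
by rewrite eq_sym => ->; rewrite mulr0.
Qed.

Lemma family_inv F g y : g \in unitmx -> family_orbits F y -> family_orbits F (actGL g y).
Proof.
move=> ug [al [h [uh ->]]]; exists al, (g *m h); split; last by rewrite actGL_comp.
by rewrite unitmx_mul ug uh.
Qed.

Lemma zcl_act B g : g \in unitmx -> (forall y, B y -> B (actGL g y)) ->
  forall x, zclosure B x -> zclosure B (actGL g x).
Proof.
move=> ug HB x Hx p Hp; have [q Hq] := mpoly_of_act g p.
rewrite -Hq; apply: Hx => y By; rewrite Hq; exact: Hp _ (HB _ By).
Qed.

Lemma orbit_zcl F Q : zclosure (family_orbits F) Q ->
  subset_pt (zclosure (orbitGL Q)) (zclosure (family_orbits F)).
Proof.
move=> HQ; apply: zcl_closed => y [g [ug ->]]; apply: zcl_act => //.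
by move=> z; apply: family_inv.
Qed.

Lemma degen F Q (al : C -> C) (h : C -> 'M[C]_3) (hi : C -> 'M[C]_3)
  (cf : 'I_2 -> 'I_3 -> 'I_3 -> 'I_3 -> {poly C}) :
  (forall s, s != 0 -> h s *m hi s = 1%:M) ->
  (forall s, s != 0 -> forall t a b k, \sum_l (cf t a b l).[s] * h s k l
        = \sum_i \sum_j h s i a * h s j b * sc (F (al s)) t i j k) ->
  (forall t i j k, sc Q t i j k = (cf t i j k).[0]) ->
  zclosure (family_orbits F) Q.
Proof.
move=> uh Hh HQ.
pose c n := cf (dt n) (di n) (dj n) (dk n).
have -> : Q = fun n => (c n).[0].
  apply: functional_extensionality => n; rewrite -[in LHS](enc_dec n); exact: HQ.
apply: zcl_curve => s s0.
have uhs : h s \in unitmx by case: (mulmx1_unit (uh s s0)).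
exists (al s), (invmx (h s)); split; first by rewrite unitmx_inv.
apply: iso_act => // t a b k; rewrite -Hh //; apply: eq_bigr => l _.
by rewrite /sc /= /c dt_enc di_enc dj_enc dk_enc.
Qed.

Definition o0 : 'I_3 := @Ordinal 3 0 isT.
Definition o1 : 'I_3 := @Ordinal 3 1 isT.
Definition o2 : 'I_3 := @Ordinal 3 2 isT.

Lemma sum_I3 (f : 'I_3 -> C) : \sum_i f i = f o0 + f o1 + f o2.
Proof.
rewrite !big_ord_recl big_ord0 addr0 addrA; congr (f _ + f _ + f _); exact: val_inj.
Qed.

Definition mat (f : nat -> nat -> C) : 'M[C]_3 := \matrix_(i, j) f i j.

Lemma matE f i j : mat f i j = f i j.
Proof. by rewrite mxE. Qed.


Definition t0 : 'I_2 := @Ordinal 2 0 isT.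
Definition t1 : 'I_2 := @Ordinal 2 1 isT.
Lemma I3P (i : 'I_3) : i = o0 \/ i = o1 \/ i = o2.
Proof.
case: i => [[|[|[|m]]] Hm]; [left|right;left|right;right|by []]; exact: val_inj.
Qed.
Lemma I2P (i : 'I_2) : i = t0 \/ i = t1.
Proof.
case: i => [[|[|m]] Hm]; [left|right|by []]; exact: val_inj.
Qed.

Ltac ord_cases t := case: (I3P t) => [->|[->|->]].
Ltac solve_eq := first [ring | by field].
Ltac ord2_cases t := case: (I2P t) => [->|->].

Definition cf1a : 'I_2 -> 'I_3 -> 'I_3 -> 'I_3 -> {poly C} := fun t i j k =>
  match nat_of_ord t, nat_of_ord i, nat_of_ord j, nat_of_ord k with
  | 1%N, 0%N, 1%N, 1%N => 1%:P | 1%N, 1%N, 0%N, 1%N => - 1%:P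
  | 1%N, 0%N, 2%N, 1%N => 1%:P | 1%N, 2%N, 0%N, 1%N => - 1%:P
  | 1%N, 0%N, 2%N, 2%N => 1%:P + 'X | 1%N, 2%N, 0%N, 2%N => - (1%:P + 'X)
  | _, _, _, _ => 0 end.

Definition h1a (s : C) := mat (fun i j => match i, j with
  | 0%N, 0%N => 1 | 1%N, 1%N => - s | 1%N, 2%N => 1 | 2%N, 2%N => s | _, _ => 0 end).
Definition hi1a (s : C) := mat (fun i j => match i, j with
  | 0%N, 0%N => 1 | 1%N, 1%N => - s^-1 | 1%N, 2%N => s^-2 | 2%N, 2%N => s^-1 | _, _ => 0 end).

Lemma d1a : zclosure (family_orbits P3_4) P3_3.
Proof.
apply: (@degen _ _ (fun s => 1 + s) h1a hi1a cf1a).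
- move=> s s0; apply/matrixP => i j; rewrite !mxE sum_I3 !matE.
  ord_cases i; ord_cases j; rewrite /= ?mxE /=; solve_eq.
- move=> s s0 t a b k; rewrite !sum_I3 /P3_4 !sc_mk !matE.
  ord2_cases t; ord_cases a; ord_cases b; ord_cases k;
  rewrite /cf1a; cbn [nat_of_ord o0 o1 o2 t0 t1]; rewrite ?(horner0, hornerD, hornerN, hornerX, hornerC); solve_eq.
- move=> t i j k; rewrite /P3_3 sc_mk.
  ord2_cases t; ord_cases i; ord_cases j; ord_cases k;
  rewrite /cf1a; cbn [nat_of_ord o0 o1 o2 t0 t1]; rewrite ?(horner0, hornerD, hornerN, hornerX, hornerC) //; solve_eq.
Qed.
Definition cf1b : 'I_2 -> 'I_3 -> 'I_3 -> 'I_3 -> {poly C} := fun t i j k =>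
  match nat_of_ord t, nat_of_ord i, nat_of_ord j, nat_of_ord k with
  | 1%N, 0%N, 1%N, 2%N => 1%:P | 1%N, 1%N, 0%N, 2%N => - 1%:P | 1%N, 0%N, 2%N, 2%N => 'X | 1%N, 2%N, 0%N, 2%N => - 'X
  | _, _, _, _ => 0 end.
Definition cf1c : 'I_2 -> 'I_3 -> 'I_3 -> 'I_3 -> {poly C} := fun t i j k =>
  match nat_of_ord t, nat_of_ord i, nat_of_ord j, nat_of_ord k with
  | 1%N, 0%N, 1%N, 1%N => 'X | 1%N, 1%N, 0%N, 1%N => - 'X
  | _, _, _, _ => 0 end.
Definition cf2a : 'I_2 -> 'I_3 -> 'I_3 -> 'I_3 -> {poly C} := fun t i j k =>
  match nat_of_ord t, nat_of_ord i, nat_of_ord j, nat_of_ord k with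
  | 0%N, 0%N, 0%N, 1%N => 1%:P | 0%N, 0%N, 2%N, 1%N => 'X | 0%N, 2%N, 0%N, 1%N => 'X | 1%N, 0%N, 2%N, 1%N => 1%:P | 1%N, 2%N, 0%N, 1%N => - 1%:P
  | _, _, _, _ => 0 end.
Definition cf2b : 'I_2 -> 'I_3 -> 'I_3 -> 'I_3 -> {poly C} := fun t i j k =>
  match nat_of_ord t, nat_of_ord i, nat_of_ord j, nat_of_ord k with
  | 0%N, 0%N, 0%N, 1%N => 1%:P | 0%N, 0%N, 2%N, 1%N => 'X | 0%N, 2%N, 0%N, 1%N => 'X
  | _, _, _, _ => 0 end.
Definition cf2c : 'I_2 -> 'I_3 -> 'I_3 -> 'I_3 -> {poly C} := fun t i j k =>
  match nat_of_ord t, nat_of_ord i, nat_of_ord j, nat_of_ord k with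
  | 0%N, 0%N, 1%N, 2%N => 'X | 0%N, 1%N, 0%N, 2%N => 'X | 1%N, 0%N, 1%N, 2%N => 1%:P | 1%N, 1%N, 0%N, 2%N => - 1%:P
  | _, _, _, _ => 0 end.
Definition cf2d : 'I_2 -> 'I_3 -> 'I_3 -> 'I_3 -> {poly C} := fun t i j k =>
  match nat_of_ord t, nat_of_ord i, nat_of_ord j, nat_of_ord k with
  | 0%N, 0%N, 1%N, 2%N => 'X | 0%N, 1%N, 0%N, 2%N => 'X
  | _, _, _, _ => 0 end.
Definition h1b (s : C) := mat (fun i j => match i, j with
  | 0%N, 0%N => s | 1%N, 1%N => 1 | 1%N, 2%N => s | 2%N, 1%N => 1 | _, _ => 0 end).
Definition hi1b (s : C) := mat (fun i j => match i, j with
  | 0%N, 0%N => s^-1 | 1%N, 2%N => 1 | 2%N, 1%N => s^-1 | 2%N, 2%N => - s^-1 | _, _ => 0 end).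
Definition hd (s : C) := mat (fun i j => match i, j with
  | 0%N, 0%N => s | 1%N, 1%N => s | 2%N, 2%N => s | _, _ => 0 end).
Definition hid (s : C) := mat (fun i j => match i, j with
  | 0%N, 0%N => s^-1 | 1%N, 1%N => s^-1 | 2%N, 2%N => s^-1 | _, _ => 0 end).
Definition h2 (s : C) := mat (fun i j => match i, j with
  | 0%N, 0%N => 1 | 0%N, 2%N => 2 * s | 1%N, 0%N => 1 | 2%N, 1%N => 2 | _, _ => 0 end).
Definition hi2 (s : C) := mat (fun i j => match i, j with
  | 0%N, 1%N => 1 | 1%N, 2%N => 2^-1 | 2%N, 0%N => (2 * s)^-1 | 2%N, 1%N => - (2 * s)^-1 | _, _ => 0 end).
Definition h2c (s : C) := mat (fun i j => match i, j with
  | 0%N, 0%N => s | 1%N, 1%N => 1 | 2%N, 2%N => 1 | _, _ => 0 end).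
Definition hi2c (s : C) := mat (fun i j => match i, j with
  | 0%N, 0%N => s^-1 | 1%N, 1%N => 1 | 2%N, 2%N => 1 | _, _ => 0 end).

Lemma d1b : zclosure (family_orbits P3_4) P3_2.
Proof.
apply: (@degen _ _ (fun s => 0) h1b hi1b cf1b).
- move=> s s0; have two : (2 : C) != 0 by rewrite pnatr_eq0.
  apply/matrixP => i j; rewrite !mxE sum_I3 !matE.
  ord_cases i; ord_cases j; rewrite /= ?mxE /=; solve_eq.
- move=> s s0 t a b k; rewrite !sum_I3 /P3_4 !sc_mk !matE.
  ord2_cases t; ord_cases a; ord_cases b; ord_cases k;
  rewrite /cf1b; cbn [nat_of_ord o0 o1 o2 t0 t1]; rewrite ?(horner0, hornerD, hornerN, hornerX, hornerC); solve_eq.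
- move=> t i j k; rewrite /P3_2 sc_mk.
  ord2_cases t; ord_cases i; ord_cases j; ord_cases k;
  rewrite /cf1b; cbn [nat_of_ord o0 o1 o2 t0 t1]; rewrite ?(horner0, hornerD, hornerN, hornerX, hornerC) //; solve_eq.
Qed.

Lemma d1c : zclosure (family_orbits P3_4) P3_1.
Proof.
apply: (@degen _ _ (fun s => 0) hd hid cf1c).
- move=> s s0; have two : (2 : C) != 0 by rewrite pnatr_eq0.
  apply/matrixP => i j; rewrite !mxE sum_I3 !matE.
  ord_cases i; ord_cases j; rewrite /= ?mxE /=; solve_eq.
- move=> s s0 t a b k; rewrite !sum_I3 /P3_4 !sc_mk !matE.
  ord2_cases t; ord_cases a; ord_cases b; ord_cases k;
  rewrite /cf1c; cbn [nat_of_ord o0 o1 o2 t0 t1]; rewrite ?(horner0, hornerD, hornerN, hornerX, hornerC); solve_eq.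
- move=> t i j k; rewrite /P3_1 sc_mk.
  ord2_cases t; ord_cases i; ord_cases j; ord_cases k;
  rewrite /cf1c; cbn [nat_of_ord o0 o1 o2 t0 t1]; rewrite ?(horner0, hornerD, hornerN, hornerX, hornerC) //; solve_eq.
Qed.

Lemma d2a : zclosure (family_orbits P3_16) P3_15.
Proof.
apply: (@degen _ _ (fun s => - s^-1) h2 hi2 cf2a).
- move=> s s0; have two : (2 : C) != 0 by rewrite pnatr_eq0.
  apply/matrixP => i j; rewrite !mxE sum_I3 !matE.
  ord_cases i; ord_cases j; rewrite /= ?mxE /=; solve_eq.
- move=> s s0 t a b k; rewrite !sum_I3 /P3_16 !sc_mk !matE.
  ord2_cases t; ord_cases a; ord_cases b; ord_cases k;
  rewrite /cf2a; cbn [nat_of_ord o0 o1 o2 t0 t1]; rewrite ?(horner0, hornerD, hornerN, hornerX, hornerC); solve_eq.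
- move=> t i j k; rewrite /P3_15 sc_mk.
  ord2_cases t; ord_cases i; ord_cases j; ord_cases k;
  rewrite /cf2a; cbn [nat_of_ord o0 o1 o2 t0 t1]; rewrite ?(horner0, hornerD, hornerN, hornerX, hornerC) //; solve_eq.
Qed.

Lemma d2b : zclosure (family_orbits P3_16) P3_13.
Proof.
apply: (@degen _ _ (fun s => 0) h2 hi2 cf2b).
- move=> s s0; have two : (2 : C) != 0 by rewrite pnatr_eq0.
  apply/matrixP => i j; rewrite !mxE sum_I3 !matE.
  ord_cases i; ord_cases j; rewrite /= ?mxE /=; solve_eq.
- move=> s s0 t a b k; rewrite !sum_I3 /P3_16 !sc_mk !matE.
  ord2_cases t; ord_cases a; ord_cases b; ord_cases k;
  rewrite /cf2b; cbn [nat_of_ord o0 o1 o2 t0 t1]; rewrite ?(horner0, hornerD, hornerN, hornerX, hornerC); solve_eq.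
- move=> t i j k; rewrite /P3_13 sc_mk.
  ord2_cases t; ord_cases i; ord_cases j; ord_cases k;
  rewrite /cf2b; cbn [nat_of_ord o0 o1 o2 t0 t1]; rewrite ?(horner0, hornerD, hornerN, hornerX, hornerC) //; solve_eq.
Qed.

Lemma d2c : zclosure (family_orbits P3_16) P3_2.
Proof.
apply: (@degen _ _ (fun s => s^-1) h2c hi2c cf2c).
- move=> s s0; have two : (2 : C) != 0 by rewrite pnatr_eq0.
  apply/matrixP => i j; rewrite !mxE sum_I3 !matE.
  ord_cases i; ord_cases j; rewrite /= ?mxE /=; solve_eq.
- move=> s s0 t a b k; rewrite !sum_I3 /P3_16 !sc_mk !matE.
  ord2_cases t; ord_cases a; ord_cases b; ord_cases k;
  rewrite /cf2c; cbn [nat_of_ord o0 o1 o2 t0 t1]; rewrite ?(horner0, hornerD, hornerN, hornerX, hornerC); solve_eq.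
- move=> t i j k; rewrite /P3_2 sc_mk.
  ord2_cases t; ord_cases i; ord_cases j; ord_cases k;
  rewrite /cf2c; cbn [nat_of_ord o0 o1 o2 t0 t1]; rewrite ?(horner0, hornerD, hornerN, hornerX, hornerC) //; solve_eq.
Qed.

Lemma d2d : zclosure (family_orbits P3_16) P3_1.
Proof.
apply: (@degen _ _ (fun s => 0) hd hid cf2d).
- move=> s s0; have two : (2 : C) != 0 by rewrite pnatr_eq0.
  apply/matrixP => i j; rewrite !mxE sum_I3 !matE.
  ord_cases i; ord_cases j; rewrite /= ?mxE /=; solve_eq.
- move=> s s0 t a b k; rewrite !sum_I3 /P3_16 !sc_mk !matE.
  ord2_cases t; ord_cases a; ord_cases b; ord_cases k;
  rewrite /cf2d; cbn [nat_of_ord o0 o1 o2 t0 t1]; rewrite ?(horner0, hornerD, hornerN, hornerX, hornerC); solve_eq.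
- move=> t i j k; rewrite /P3_1 sc_mk.
  ord2_cases t; ord_cases i; ord_cases j; ord_cases k;
  rewrite /cf2d; cbn [nat_of_ord o0 o1 o2 t0 t1]; rewrite ?(horner0, hornerD, hornerN, hornerX, hornerC) //; solve_eq.
Qed.

Theorem lemma4p9 :
  (subset_pt (zclosure (orbitGL P3_3)) (zclosure (family_orbits P3_4)) /\
   subset_pt (zclosure (orbitGL P3_2)) (zclosure (family_orbits P3_4)) /\
   subset_pt (zclosure (orbitGL P3_1)) (zclosure (family_orbits P3_4))) /\
  (subset_pt (zclosure (orbitGL P3_15)) (zclosure (family_orbits P3_16)) /\
   subset_pt (zclosure (orbitGL P3_13)) (zclosure (family_orbits P3_16)) /\
   subset_pt (zclosure (orbitGL P3_2)) (zclosure (family_orbits P3_16)) /\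
   subset_pt (zclosure (orbitGL P3_1)) (zclosure (family_orbits P3_16))).
Proof.
split; [split; [|split] | split; [|split; [|split]]]; apply: orbit_zcl.
- exact: d1a.
- exact: d1b.
- exact: d1c.
- exact: d2a.
- exact: d2b.
- exact: d2c.
- exact: d2d.
Qed.
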